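(* Let $0\le a<b<1$ and let $\varrho\ge0$ be a bounded function on $[a,b]$ such that $\varrho/\zeta$ is non-decreasing on $[a,b]$. Then (i) $m(\varrho/\zeta,a,b)\le(\varrho/\zeta)(b-)+m(a,b)$, where $(\varrho/\zeta)(b-)=\lim_{t\uparrow b}\varrho(t)/\zeta(t)$; (ii) equality holds in (i) if and only if $\varrho\equiv0$ on $[a,b)$.
   Context: $\zeta(t)=\frac{2}{1-t^2}$ on $[0,1)$. With $h$ a primitive of $\varrho$ on $[a,b]$, $\psi=e^h$, $\mathtt f(x)=x\zeta(x)^2\psi(x)$, $\mathtt g(x)=x\zeta(x)\psi(x)$, define $m(\varrho/\zeta,a,b):=\frac{\mathtt g(b)-\mathtt g(a)}{\int_a^b\mathtt f\,dt}$, and $m(a,b):=m(0,a,b)=\frac{b\zeta(b)-a\zeta(a)}{\zeta(b)-\zeta(a)}=\frac{1+ab}{a+b}$ (the value for $\varrho\equiv0$). *)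

(* Defs.v *)
From Stdlib Require Import Reals ClassicalEpsilon.
Open Scope R_scope.

Definition zeta (t : R) : R := 2 / (1 - t ^ 2).

(* Total Riemann integral: RiemannInt of f on [a,b] when f is Riemann
   integrable there (value independent of the proof), 0 otherwise. *)
Definition Rint (f : R -> R) (a b : R) : R :=
  match excluded_middle_informative (inhabited (Riemann_integrable f a b)) with
  | left H => RiemannInt (epsilon H (fun _ => True))
  | right _ => 0
  end.

(* With h a primitive of rho on [a,b], psi = e^h,
   f(x) = x zeta(x)^2 psi(x), g(x) = x zeta(x) psi(x),
   m(rho/zeta,a,b) = (g b - g a) / int_a^b f. *)
Definition m_rho (h : R -> R) (a b : R) : R :=
  let psi := fun x => exp (h x) in
  let f := fun x => x * zeta x ^ 2 * psi x in
  let g := fun x => x * zeta x * psi x in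
  (g b - g a) / Rint f a b.

Definition m0 (a b : R) : R :=
  (b * zeta b - a * zeta a) / (zeta b - zeta a).

(* Main.v *)
Require Import Defs.
From Stdlib Require Import Reals Lra Lia Classical ClassicalEpsilon.
From Coquelicot Require Import Coquelicot.
Open Scope R_scope.


Lemma piece_SF (F : R -> R) x y c : x <= y -> (forall t, x < t < y -> F t = c) ->
  { pr : IsStepFun F x y | RiemannInt_SF (mkStepFun pr) = c * (y - x) }.
Proof.
  intros Hxy HF.
  assert (Hac : adapted_couple F x y (x :: y :: nil)%list (c :: nil)%list).
  { unfold adapted_couple; repeat split.
    - intros i Hi; simpl in Hi. destruct i; [simpl; lra | lia].
    - simpl; rewrite Rmin_left; auto.
    - simpl; rewrite Rmax_right; auto.
    - intros i Hi; simpl in Hi. destruct i; [|lia].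
      intros t Ht; simpl in Ht |- *; apply HF; unfold open_interval in Ht; lra. }
  exists (existT _ (x :: y :: nil)%list (existT _ (c :: nil)%list Hac)).
  unfold RiemannInt_SF; simpl.
  destruct (Rle_dec x y); [simpl; ring | contradiction].
Qed.

Definition node (a d : R) (k : nat) := a + INR k * d.
Fixpoint stp (a d : R) (g : nat -> R) (m : nat) (t : R) : R :=
  match m with O => g O
  | S m' => if Rlt_dec t (node a d m') then stp a d g m' t else g m' end.

Lemma node_le a d (Hd : 0 < d) j k : (j <= k)%nat -> node a d j <= node a d k.
Proof. intros H; unfold node. apply le_INR in H. nra. Qed.

Lemma stp_val a d g (Hd : 0 < d) m j t : (j < m)%nat -> node a d j <= t < node a d (S j) -> stp a d g m t = g j.
Proof.
  induction m as [|m IH]; intros Hj Ht; [lia|].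
  simpl. destruct (Rlt_dec t (node a d m)) as [Hl|Hl].
  - assert (j <> m). { intro; subst; lra. }
    apply IH; [lia|auto].
  - assert (j = m). { destruct (Nat.eq_dec j m); auto.
      assert (S j <= m)%nat by lia. pose proof (node_le a d Hd _ _ H). lra. }
    subst; auto.
Qed.

Lemma stp_last a d g m t : node a d m <= t -> stp a d g (S m) t = g m.
Proof. intros H; simpl. destruct (Rlt_dec t (node a d m)); [lra|auto]. Qed.

Lemma find_j a d m t : node a d 0 <= t < node a d m -> exists j, (j < m)%nat /\ node a d j <= t < node a d (S j).
Proof.
  induction m as [|m IH]; intros Ht; [lra|].
  destruct (Rlt_dec t (node a d m)) as [Hl|Hl].
  - destruct (IH ltac:(lra)) as [j [Hj1 Hj2]]. exists j; split; [lia|auto].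
  - exists m; split; [lia|lra].
Qed.

Fixpoint psum (g : nat -> R) (k : nat) : R := match k with O => 0 | S k' => psum g k' + g k' end.

Lemma stp_SF a d g (Hd : 0 < d) m k : (k <= m)%nat -> forall x y, x = node a d 0 -> y = node a d k ->
  { pr : IsStepFun (stp a d g m) x y |
    RiemannInt_SF (mkStepFun pr) = d * psum g k }.
Proof.
  induction k as [|k IH]; intros Hk x y Hx Hy.
  - destruct (piece_SF (stp a d g m) x y 0) as [pr Hpr].
    + subst; lra.
    + intros t Ht; subst; lra.
    + exists pr. rewrite Hpr. simpl. subst. ring.
  - destruct (IH ltac:(lia) x (node a d k) Hx eq_refl) as [pr1 H1].
    destruct (piece_SF (stp a d g m) (node a d k) y (g k)) as [pr2 H2].
    + subst. apply node_le; [exact Hd | lia].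
    + intros t Ht. apply stp_val; [exact Hd|lia|]. subst; lra.
    + exists (StepFun_P46 pr1 pr2).
      rewrite <- (StepFun_P43 pr1 pr2 (StepFun_P46 pr1 pr2)).
      rewrite H1, H2. subst. unfold node. rewrite S_INR. simpl. ring.
Qed.

Lemma mono_RI (f : R -> R) a b : a < b ->
  (forall x y, a <= x -> x <= y -> y <= b -> f x <= f y) -> Riemann_integrable f a b.
Proof.
  intros Hab Hm eps.
  destruct (constructive_indefinite_description _ (INR_unbounded ((b-a)*(f b - f a)/eps))) as [n0 Hn0].
  set (n := S n0). set (d := (b-a)/INR n).
  assert (HnP : 0 < INR n) by (unfold n; rewrite S_INR; pose proof (pos_INR n0); lra).
  assert (Hd : 0 < d) by (unfold d; apply Rdiv_lt_0_compat; lra).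
  assert (Hnb : node a d n = b) by (unfold node, d; field; lra).
  assert (Hn0a : node a d 0 = a) by (unfold node; simpl; ring).
  assert (Hnode : forall j, (j <= n)%nat -> a <= node a d j <= b).
  { intros j Hj. split. unfold node. pose proof (pos_INR j). nra.
    rewrite <- Hnb. apply node_le; auto. }
  set (g1 := fun j => f (node a d j)).
  set (g2 := fun j => f (node a d (S j)) - f (node a d j)).
  destruct (stp_SF a d g1 Hd n n (le_n _) a b (eq_sym Hn0a) (eq_sym Hnb)) as [pr1 _].
  destruct (stp_SF a d g2 Hd n n (le_n _) a b (eq_sym Hn0a) (eq_sym Hnb)) as [pr2 H2].
  exists (mkStepFun pr1), (mkStepFun pr2).
  assert (Hps : forall k, psum g2 k = f (node a d k) - f (node a d 0)).
  { induction k; simpl; [ring|]. rewrite IHk. unfold g2. ring. }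
  split.
  - intros t Ht. rewrite Rmin_left in Ht by lra. rewrite Rmax_right in Ht by lra. cbn [fe].
    destruct (Rlt_dec t b) as [Htb|Htb].
    + destruct (find_j a d n t ltac:(rewrite Hn0a, Hnb; lra)) as [j [Hj Hjt]].
      rewrite (stp_val a d g1 Hd n j t Hj Hjt), (stp_val a d g2 Hd n j t Hj Hjt).
      unfold g1, g2.
      pose proof (Hnode j ltac:(unfold n in *; lia)). pose proof (Hnode (S j) ltac:(unfold n in *; lia)).
      assert (f (node a d j) <= f t) by (apply Hm; lra).
      assert (f t <= f (node a d (S j))) by (apply Hm; lra).
      unfold Rabs; destruct (Rcase_abs _); lra.
    + assert (t = b) by lra. subst t.
      assert (Hl : node a d n0 <= b). { rewrite <- Hnb. apply node_le. exact Hd. unfold n. lia. }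
      unfold n. rewrite (stp_last a d g1 n0 b Hl), (stp_last a d g2 n0 b Hl).
      unfold g1, g2. fold n. rewrite Hnb.
      pose proof (Hnode n0 ltac:(unfold n; lia)).
      assert (f (node a d n0) <= f b) by (apply Hm; lra).
      unfold Rabs; destruct (Rcase_abs _); lra.
  - rewrite H2, Hps, Hnb, Hn0a.
    assert (f a <= f b) by (apply Hm; lra).
    assert (Hlt : d * (f b - f a) < eps).
    { unfold d. destruct eps as [e He]; cbn [pos] in *.
      apply Rmult_lt_reg_r with (INR n / e). apply Rdiv_lt_0_compat; lra.
      assert (INR n0 < INR n) by (apply lt_INR; unfold n; lia).
      replace ((b - a) / INR n * (f b - f a) * (INR n / e)) with ((b-a)*(f b - f a)/e) by (field; lra).
      replace (e * (INR n / e)) with (INR n) by (field; lra). lra. }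
    rewrite Rabs_right; [lra|]. apply Rle_ge. nra.
Qed.


Lemma dini (F : R -> R) a b : a <= b ->
  (forall x, a <= x < b -> forall eps, 0 < eps -> exists d, 0 < d /\
     forall y, x < y < x + d -> y <= b -> F y - F x <= eps * (y - x)) ->
  (forall x, a < x <= b -> forall eta, 0 < eta -> exists d, 0 < d /\
     forall y, x - d < y < x -> a <= y -> F x - F y <= eta) ->
  F b <= F a.
Proof.
  intros Hab HR HC.
  assert (Heps : forall eps, 0 < eps -> F b <= F a + eps * (b - a)).
  { intros eps Heps.
    set (S := fun x => a <= x <= b /\ forall z, a <= z <= x -> F z <= F a + eps * (z - a)).
    assert (HSb : bound S). { exists b. intros x [Hx _]. lra. }
    assert (HSa : exists x, S x). { exists a. split; [lra|]. intros z Hz. assert (z = a) by lra. subst; lra. }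
    destruct (completeness S HSb HSa) as [s [Hub Hlub]].
    assert (Has : a <= s) by (apply Hub; destruct HSa as [x Hx]; unfold S; split; [lra|];
                              intros z Hz; assert (z = a) by lra; subst; lra).
    assert (Hsb : s <= b) by (apply Hlub; intros x [Hx _]; lra).
    assert (Hbelow : forall z, a <= z < s -> F z <= F a + eps * (z - a)).
    { intros z Hz. destruct (Rle_dec s z) as [H|H]; [lra|].
      assert (exists x, S x /\ z < x) as [x [[Hx1 Hx2] Hzx]].
      { apply Classical_Prop.NNPP. intro Hn.
        assert (is_upper_bound S z).
        { intros x Hx. destruct (Rle_dec x z); auto. exfalso; apply Hn; exists x; split; auto; lra. }
        apply H. apply Hlub; auto. }
      apply Hx2; lra. }
    assert (Hats : F s <= F a + eps * (s - a)).
    { destruct (Req_dec s a) as [E|E]; [subst; lra|].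
      apply Rnot_lt_le; intro Hlt.
      set (eta := (F s - (F a + eps * (s - a)))).
      destruct (HC s ltac:(lra) eta ltac:(unfold eta; lra)) as [d [Hd Hd2]].
      set (y := Rmax a (s - d/2)).
      assert (Hy1 : s - d < y < s) by (unfold y; unfold Rmax; destruct (Rle_dec a (s-d/2)); lra).
      assert (Hy2 : a <= y) by (unfold y; apply Rmax_l).
      specialize (Hd2 y Hy1 Hy2). specialize (Hbelow y ltac:(lra)).
      unfold eta in Hd2. nra. }
    destruct (Rle_dec b s) as [Hbs|Hbs].
    { assert (s = b) by lra. subst; lra. }
    destruct (HR s ltac:(lra) eps Heps) as [d [Hd Hd2]].
    set (y := Rmin b (s + d/2)).
    assert (Hy : s < y <= b) by (unfold y, Rmin; destruct (Rle_dec b (s + d/2)); lra).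
    assert (S y).
    { split; [lra|]. intros z Hz. destruct (Rlt_dec z s) as [Hzs|Hzs]; [apply Hbelow; lra|].
      destruct (Req_dec z s) as [E|E]; [subst; lra|].
      assert (Hd3 := Hd2 z ltac:(unfold y, Rmin in Hz; destruct (Rle_dec b (s + d/2)); lra) ltac:(lra)).
      nra. }
    assert (y <= s) by (apply Hub; auto). lra. }
  apply Rnot_lt_le; intro Hlt.
  destruct (Req_dec a b) as [E|E]; [subst; lra|].
  specialize (Heps ((F b - F a) / (2 * (b - a))) ltac:(apply Rdiv_lt_0_compat; lra)).
  replace ((F b - F a) / (2 * (b - a)) * (b - a)) with ((F b - F a)/2) in Heps by (field; lra).
  lra.
Qed.


Lemma Rint_RInt f a b : ex_RInt f a b -> Rint f a b = RInt f a b.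
Proof.
  intros H. apply ex_RInt_Reals_0 in H. unfold Rint.
  destruct (excluded_middle_informative _) as [Hi|Hi].
  - rewrite (RInt_Reals f a b (epsilon Hi (fun _ => True))). reflexivity.
  - exfalso; apply Hi; constructor; exact H.
Qed.

Definition U (x : R) := x * zeta x.
Definition dU (x : R) := 2 * (1 + x^2) / (1 - x^2)^2.
Definition dV (x : R) := 4 * x / (1 - x^2)^2.

Lemma den_nz x : 0 <= x < 1 -> 1 - x^2 <> 0.
Proof. intros; nra. Qed.

Lemma zeta_pos x : 0 <= x < 1 -> 0 < zeta x.
Proof. intros H; unfold zeta. apply Rdiv_lt_0_compat; nra. Qed.

Lemma zeta_le x y : 0 <= x -> x <= y -> y < 1 -> zeta x <= zeta y.
Proof.
  intros; unfold zeta, Rdiv. apply Rmult_le_compat_l; [lra|].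
  apply Rinv_le_contravar; nra.
Qed.

Lemma U_deriv x : 0 <= x < 1 -> is_derive U x (dU x).
Proof.
  intros H. unfold U, zeta, dU. auto_derive.
  - nra.
  - field. nra.
Qed.

Lemma V_deriv x : 0 <= x < 1 -> is_derive zeta x (dV x).
Proof.
  intros H. unfold zeta, dV. auto_derive.
  - nra.
  - field. nra.
Qed.

Lemma dU_cont x : 0 <= x < 1 -> continuous dU x.
Proof.
  intros H. apply (ex_derive_continuous dU). unfold dU. auto_derive. apply Rmult_integral_contrapositive; split; nra.
Qed.

Lemma dV_cont x : 0 <= x < 1 -> continuous dV x.
Proof.
  intros H. apply (ex_derive_continuous dV). unfold dV. auto_derive. apply Rmult_integral_contrapositive; split; nra.
Qed.

Lemma U_cont x : 0 <= x < 1 -> continuous U x.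
Proof. intros H. apply (ex_derive_continuous U). eexists; apply U_deriv; auto. Qed.

Lemma dU_pos x : 0 <= x < 1 -> 0 < dU x.
Proof. intros H; unfold dU. apply Rdiv_lt_0_compat; [nra|]. pose proof (den_nz x H). apply pow2_gt_0 in H0. lra. Qed.

Lemma dV_nn x : 0 <= x < 1 -> 0 <= dV x.
Proof. intros H; unfold dV. apply Rmult_le_pos; [lra|]. apply Rlt_le, Rinv_0_lt_compat.
  pose proof (den_nz x H). apply pow2_gt_0 in H0. lra. Qed.

Lemma dV_eq x : 0 <= x < 1 -> dV x = x * zeta x ^ 2.
Proof. intros H; unfold dV, zeta. field. nra. Qed.

Lemma U_int a b : 0 <= a -> a <= b -> b < 1 -> is_RInt dU a b (U b - U a).
Proof.
  intros. apply (is_RInt_derive U dU a b).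
  - intros x Hx. rewrite Rmin_left, Rmax_right in Hx by lra. apply U_deriv; lra.
  - intros x Hx. rewrite Rmin_left, Rmax_right in Hx by lra. apply dU_cont; lra.
Qed.

Lemma V_int a b : 0 <= a -> a <= b -> b < 1 -> is_RInt dV a b (zeta b - zeta a).
Proof.
  intros. apply (is_RInt_derive zeta dV a b).
  - intros x Hx. rewrite Rmin_left, Rmax_right in Hx by lra. apply V_deriv; lra.
  - intros x Hx. rewrite Rmin_left, Rmax_right in Hx by lra. apply dV_cont; lra.
Qed.


Lemma rho_mono a b rho : 0 <= a -> b < 1 ->
  (forall t, a <= t <= b -> 0 <= rho t) ->
  (forall s t, a <= s -> s <= t -> t <= b -> rho s / zeta s <= rho t / zeta t) ->
  forall s t, a <= s -> s <= t -> t <= b -> rho s <= rho t.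
Proof.
  intros Ha Hb Hn Hm s t Hs Hst Htb.
  pose proof (zeta_pos s ltac:(lra)). pose proof (zeta_pos t ltac:(lra)).
  pose proof (zeta_le s t ltac:(lra) Hst ltac:(lra)).
  pose proof (Hm s t Hs Hst Htb).
  assert (0 <= rho t / zeta t) by (apply Rdiv_le_0_compat; [apply Hn; lra| lra]).
  replace (rho s) with (rho s / zeta s * zeta s) by (field; lra).
  replace (rho t) with (rho t / zeta t * zeta t) by (field; lra).
  apply Rle_trans with (rho t / zeta t * zeta s); [apply Rmult_le_compat_r; lra|].
  apply Rmult_le_compat_l; lra.
Qed.

Lemma rho_ex a b rho : (forall s t, a <= s -> s <= t -> t <= b -> rho s <= rho t) ->
  forall y z, a <= y <= b -> a <= z <= b -> ex_RInt rho y z.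
Proof.
  intros Hm.
  assert (K : forall y z, a <= y <= b -> a <= z <= b -> y <= z -> ex_RInt rho y z).
  { intros y z Hy Hz Hyz. destruct (Req_dec y z) as [E|E].
    - subst; apply ex_RInt_point.
    - apply ex_RInt_Reals_1. apply mono_RI; [lra|]. intros; apply Hm; lra. }
  intros y z Hy Hz. destruct (Rle_dec y z).
  - apply K; auto.
  - apply ex_RInt_swap, K; auto; lra.
Qed.

Lemma rho_le_L a b rho L : 0 <= a -> a < b -> b < 1 ->
  (forall s t, a <= s -> s <= t -> t <= b -> rho s / zeta s <= rho t / zeta t) ->
  (forall eps, eps > 0 -> exists delta, delta > 0 /\
          forall t, a <= t < b -> b - t < delta -> Rabs (rho t / zeta t - L) < eps) ->
  forall t, a <= t < b -> rho t <= L * zeta t.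
Proof.
  intros Ha Hab Hb Hm HL t Ht.
  pose proof (zeta_pos t ltac:(lra)).
  apply Rnot_lt_le; intro Hlt.
  assert (Hphi : L < rho t / zeta t).
  { apply Rmult_lt_reg_r with (zeta t); auto. replace (rho t / zeta t * zeta t) with (rho t) by (field; lra). lra. }
  destruct (HL (rho t / zeta t - L) ltac:(lra)) as [d [Hd Hd2]].
  set (s := Rmax t (b - d/2)).
  assert (Hs : t <= s /\ b - d/2 <= s /\ s < b) by (unfold s, Rmax; destruct (Rle_dec t (b - d/2)); lra).
  specialize (Hd2 s ltac:(lra) ltac:(lra)).
  pose proof (Hm t s ltac:(lra) ltac:(lra) ltac:(lra)).
  apply Rabs_lt_between in Hd2. lra.
Qed.

Definition clamp a b x := Rmax a (Rmin b x).

Lemma clamp_in a b x : a <= b -> a <= clamp a b x <= b.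
Proof. intros; unfold clamp, Rmin; destruct (Rle_dec b x); unfold Rmax; repeat match goal with |- context [Rle_dec ?p ?q] => destruct (Rle_dec p q) end; lra. Qed.

Lemma clamp_id a b x : a <= x <= b -> clamp a b x = x.
Proof. intros; unfold clamp, Rmin; destruct (Rle_dec b x); unfold Rmax; repeat match goal with |- context [Rle_dec ?p ?q] => destruct (Rle_dec p q) end; lra. Qed.

Lemma clamp_lip a b x y : a <= b -> Rabs (clamp a b x - clamp a b y) <= Rabs (x - y).
Proof.
  intros; unfold clamp, Rmin; destruct (Rle_dec b x); destruct (Rle_dec b y); unfold Rmax;
  repeat match goal with |- context [Rle_dec ?p ?q] => destruct (Rle_dec p q) end;
  unfold Rabs; repeat destruct (Rcase_abs _); lra.
Qed.


Definition psi a b c rho x := exp (c + RInt rho a (clamp a b x)).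

Lemma H_chasles a b rho : (forall y z, a <= y <= b -> a <= z <= b -> ex_RInt rho y z) ->
  forall y z, a <= y <= b -> a <= z <= b -> RInt rho a z - RInt rho a y = RInt rho y z.
Proof.
  intros Hex y z Hy Hz.
  assert (Ha : a <= a <= b) by lra.
  rewrite <- (RInt_Chasles rho a y z) by (apply Hex; lra).
  change (RInt rho a y + RInt rho y z - RInt rho a y = RInt rho y z). ring.
Qed.

Lemma H_lip a b rho M : a <= b -> (forall y z, a <= y <= b -> a <= z <= b -> ex_RInt rho y z) ->
  (forall t, a <= t <= b -> Rabs (rho t) <= M) ->
  forall y z, a <= y <= b -> a <= z <= b -> Rabs (RInt rho a z - RInt rho a y) <= M * Rabs (z - y).
Proof.
  intros Hab Hex HM y z Hy Hz. rewrite (H_chasles a b rho Hex y z Hy Hz).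
  destruct (Rle_dec y z).
  - rewrite (Rabs_right (z - y)) by lra. rewrite Rmult_comm. apply abs_RInt_le_const; auto.
    intros; apply HM; lra.
  - rewrite <- opp_RInt_swap by (apply Hex; lra). change (Rabs (- RInt rho z y) <= M * Rabs (z - y)).
    rewrite Rabs_Ropp, (Rabs_left (z - y)) by lra. replace (- (z - y)) with (y - z) by ring.
    rewrite Rmult_comm. apply abs_RInt_le_const; [lra|apply Hex; lra|]. intros; apply HM; lra.
Qed.

Lemma Hc_cont a b rho M : a <= b -> (forall y z, a <= y <= b -> a <= z <= b -> ex_RInt rho y z) ->
  (forall t, a <= t <= b -> Rabs (rho t) <= M) ->
  forall x, continuity_pt (fun x => RInt rho a (clamp a b x)) x.
Proof.
  intros Hab Hex HM x.
  assert (HM0 : 0 <= M) by (pose proof (HM a ltac:(lra)); pose proof (Rabs_pos (rho a)); lra).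
  intros eps Heps. exists (eps / (M + 1)). split.
  { apply Rdiv_lt_0_compat; lra. }
  intros y [_ Hy]. simpl in *. unfold R_dist in *.
  pose proof (clamp_in a b x Hab). pose proof (clamp_in a b y Hab).
  pose proof (H_lip a b rho M Hab Hex HM (clamp a b x) (clamp a b y) H H0).
  pose proof (clamp_lip a b y x Hab).
  apply Rle_lt_trans with (M * Rabs (clamp a b y - clamp a b x)); auto.
  apply Rle_lt_trans with (M * Rabs (y - x)). apply Rmult_le_compat_l; auto.
  apply Rle_lt_trans with (M * (eps / (M + 1))). apply Rmult_le_compat_l; lra.
  apply Rmult_lt_reg_r with (M + 1); [lra|].
  replace (M * (eps / (M + 1)) * (M + 1)) with (M * eps) by (field; lra). nra.
Qed.

Lemma psi_cont a b c rho M : a <= b -> (forall y z, a <= y <= b -> a <= z <= b -> ex_RInt rho y z) ->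
  (forall t, a <= t <= b -> Rabs (rho t) <= M) ->
  forall x, continuous (psi a b c rho) x.
Proof.
  intros Hab Hex HM x. apply continuity_pt_filterlim. unfold psi.
  apply (continuity_pt_comp (fun x => c + RInt rho a (clamp a b x)) exp).
  - apply continuity_pt_plus. apply continuity_pt_const; intros ? ?; auto.
    apply (Hc_cont a b rho M); auto.
  - apply derivable_continuous_pt, derivable_pt_exp.
Qed.

Lemma psi_pos a b c rho x : 0 < psi a b c rho x.
Proof. apply exp_pos. Qed.

Lemma exp_le x y : x <= y -> exp x <= exp y.
Proof. intros H. destruct (Rle_lt_or_eq_dec _ _ H) as [H1|H1]; [apply Rlt_le, exp_increasing; auto| subst; lra]. Qed.

Lemma psi_mono a b c rho : a <= b -> (forall y z, a <= y <= b -> a <= z <= b -> ex_RInt rho y z) ->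
  (forall t, a <= t <= b -> 0 <= rho t) ->
  forall y z, a <= y -> y <= z -> z <= b -> psi a b c rho y <= psi a b c rho z.
Proof.
  intros Hab Hex Hn y z Hy Hyz Hz. unfold psi. rewrite !clamp_id by lra.
  apply exp_le.
  assert (0 <= RInt rho y z) by (apply RInt_ge_0; [lra|apply Hex; lra|intros; apply Hn; lra]).
  rewrite <- (H_chasles a b rho Hex y z) in H by lra. lra.
Qed.

Lemma psi_ge a b c rho : a <= b -> (forall y z, a <= y <= b -> a <= z <= b -> ex_RInt rho y z) ->
  (forall t, a <= t <= b -> 0 <= rho t) ->
  forall y, a <= y <= b -> exp c <= psi a b c rho y.
Proof.
  intros Hab Hex Hn y Hy.
  replace (exp c) with (psi a b c rho a).
  apply psi_mono; auto; lra.
  unfold psi. rewrite clamp_id by lra. rewrite RInt_point. f_equal. change (c + 0 = c). ring.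
Qed.


Lemma Phi_deriv L x : 0 <= x < 1 ->
  is_derive (fun y => U y * (exp (L * zeta y * (y - x)) - 1) - L * (zeta y - zeta x)) x 0.
Proof.
  intros H. unfold U, zeta. auto_derive.
  - repeat split; nra.
  - replace (x + - x) with 0 by ring. rewrite !Rmult_0_r, exp_0. field. nra.
Qed.

Lemma cont_mult (f g : R -> R) x : continuous f x -> continuous g x -> continuous (fun t => f t * g t) x.
Proof. intros; apply (continuous_mult f g); auto. Qed.

Lemma cont_pt_of (f : R -> R) x : continuous f x -> continuity_pt f x.
Proof. intros; apply continuity_pt_filterlim; auto. Qed.

Lemma W_cont (a b c : R) (rho : R -> R) (L M : R) : 0 <= a -> a <= b -> b < 1 ->
  (forall y z, a <= y <= b -> a <= z <= b -> ex_RInt rho y z) ->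
  (forall t, a <= t <= b -> Rabs (rho t) <= M) ->
  forall x, a <= x <= b -> continuous (fun t => (dU t + L * dV t) * psi a b c rho t) x.
Proof.
  intros Ha Hab Hb Hex HM x Hx.
  apply cont_mult; [|apply (psi_cont a b c rho M); auto].
  apply continuity_pt_filterlim. apply continuity_pt_plus; apply cont_pt_of.
  apply dU_cont; lra. apply (cont_mult (fun _ => L) dV). apply continuous_const. apply dV_cont; lra.
Qed.

Lemma star (a b c : R) (rho : R -> R) (L M : R) : 0 <= a -> a < b -> b < 1 ->
  (forall y z, a <= y <= b -> a <= z <= b -> ex_RInt rho y z) ->
  (forall t, a <= t <= b -> Rabs (rho t) <= M) ->
  (forall t, a <= t <= b -> 0 <= rho t) ->
  (forall t, a <= t < b -> rho t <= L * zeta t) -> 0 <= L ->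
  U b * psi a b c rho b - U a * psi a b c rho a <=
    RInt (fun t => (dU t + L * dV t) * psi a b c rho t) a b.
Proof.
  intros Ha Hab Hb Hex HM Hn HLz HL0.
  set (P := psi a b c rho).
  set (W := fun t => (dU t + L * dV t) * P t).
  assert (HexW : forall y z, a <= y <= b -> a <= z <= b -> ex_RInt W y z).
  { intros y z Hy Hz. apply (ex_RInt_continuous (V := R_CompleteNormedModule)). intros t Ht.
    apply (W_cont a b c rho L M); auto; try lra.
    unfold Rmin, Rmax in Ht; destruct (Rle_dec y z); lra. }
  assert (HW0 : forall t, a <= t <= b -> 0 <= W t).
  { intros t Ht. unfold W. apply Rmult_le_pos; [|apply Rlt_le, psi_pos].
    pose proof (dU_pos t ltac:(lra)); pose proof (dV_nn t ltac:(lra)); nra. }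
  set (F := fun x => U x * P x - RInt W a x).
  assert (Hd := dini F a b ltac:(lra)).
  assert (HF : F b <= F a).
  2:{ unfold F in HF. rewrite RInt_point in HF. change (U b * P b - RInt W a b <= U a * P a - 0) in HF. lra. }
  apply Hd.
  - intros x Hx eps Heps.
    set (Px := P x). assert (HPx : 0 < Px) by apply psi_pos.
    pose proof (Phi_deriv L x ltac:(lra)) as HD.
    apply is_derive_Reals in HD.
    destruct (HD (eps / Px) ltac:(apply Rdiv_lt_0_compat; lra)) as [del Hdel].
    exists del; split; [apply cond_pos|].
    intros y Hy Hyb.
    specialize (Hdel (y - x) ltac:(lra) ltac:(rewrite Rabs_right; lra)).
    replace (x + (y - x)) with y in Hdel by ring.
    replace (x - x) with 0 in Hdel by ring. rewrite Rmult_0_r, exp_0 in Hdel.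
    set (E := exp (L * zeta y * (y - x))) in *.
    set (Phi := U y * (E - 1) - L * (zeta y - zeta x)) in *.
    assert (HPhi : Phi <= eps / Px * (y - x)).
    { replace (U x * (1 - 1) - L * (zeta x - zeta x)) with 0 in Hdel by ring.
      apply Rabs_lt_between in Hdel. destruct Hdel as [_ Hdel].
      replace ((Phi - 0) / (y - x) - 0) with (Phi / (y - x)) in Hdel by (field; lra).
      apply Rmult_lt_compat_r with (r := y - x) in Hdel; [|lra].
      replace (Phi / (y - x) * (y - x)) with Phi in Hdel by (field; lra). lra. }
    assert (HI : Px * ((U y - U x) + L * (zeta y - zeta x)) <= RInt W x y).
    { assert (Hi : is_RInt (fun t => Px * (dU t + L * dV t)) x y (Px * ((U y - U x) + L * (zeta y - zeta x)))).
      { assert (Hi := is_RInt_derive (fun t => Px * (U t + L * zeta t)) (fun t => Px * (dU t + L * dV t)) x y).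
        replace (Px * (U y - U x + L * (zeta y - zeta x))) with
          (minus (Px * (U y + L * zeta y)) (Px * (U x + L * zeta x))) by (unfold minus, plus, opp; simpl; ring).
        apply Hi.
        - intros t Ht. rewrite Rmin_left, Rmax_right in Ht by lra.
          apply (is_derive_scal (fun t => U t + L * zeta t)).
          apply (is_derive_plus U (fun t => L * zeta t)). apply U_deriv; lra.
          apply (is_derive_scal zeta). apply V_deriv; lra.
        - intros t Ht. rewrite Rmin_left, Rmax_right in Ht by lra.
          apply (cont_mult (fun _ => Px)); [apply continuous_const|].
          apply continuity_pt_filterlim. apply continuity_pt_plus; apply cont_pt_of.
          apply dU_cont; lra. apply (cont_mult (fun _ => L) dV). apply continuous_const. apply dV_cont; lra. }
      rewrite <- (is_RInt_unique _ _ _ _ Hi).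
      apply RInt_le; [lra| eexists; eauto | apply HexW; lra |].
      intros t Ht. unfold W. pose proof (dU_pos t ltac:(lra)); pose proof (dV_nn t ltac:(lra)).
      assert (Px <= P t) by (apply psi_mono; auto; lra).
      rewrite Rmult_comm. apply Rmult_le_compat_l; nra. }
    assert (HP : P y <= Px * E).
    { unfold E, Px, P, psi. rewrite !clamp_id by lra. rewrite <- exp_plus. apply exp_le.
      assert (RInt rho x y <= L * zeta y * (y - x)).
      { replace (L * zeta y * (y - x)) with (RInt (fun _ => L * zeta y) x y)
          by (rewrite RInt_const; change ((y - x) * (L * zeta y) = L * zeta y * (y - x)); ring).
        apply RInt_le; [lra|apply Hex; lra|apply ex_RInt_const|].
        intros t Ht. apply Rle_trans with (L * zeta t). apply HLz; lra.
        apply Rmult_le_compat_l; auto. apply zeta_le; lra. }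
      rewrite <- (H_chasles a b rho Hex x y) in H by lra. lra. }
    assert (HUy : 0 <= U y) by (unfold U; pose proof (zeta_pos y ltac:(lra)); nra).
    unfold F.
    rewrite <- (H_chasles a b W HexW x y) in HI by lra.
    fold Px.
    assert (U y * P y <= U y * (Px * E)) by (apply Rmult_le_compat_l; auto).
    assert (Px * Phi <= Px * (eps / Px * (y - x))) by (apply Rmult_le_compat_l; lra).
    replace (Px * (eps / Px * (y - x))) with (eps * (y - x)) in H0 by (field; lra).
    unfold Phi in H0. nra.
  - intros x Hx eta Heta.
    assert (Hc : continuity_pt (fun t => U t * P t) x).
    { apply cont_pt_of, cont_mult. apply U_cont; lra. apply (psi_cont a b c rho M); auto; lra. }
    destruct (Hc eta Heta) as [d [Hdd Hd2]].
    exists d; split; auto. intros y Hy Hya.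
    assert (Hdy : R_dist y x < d) by (unfold R_dist; rewrite Rabs_left; lra).
    assert (Hxy : x <> y) by lra. specialize (Hd2 y (conj (conj I Hxy) Hdy)). simpl in Hd2. unfold R_dist in Hd2.
    unfold F.
    assert (0 <= RInt W y x) by (apply RInt_ge_0; [lra|apply HexW; lra|intros; apply HW0; lra]).
    rewrite <- (H_chasles a b W HexW y x) in H by lra.
    apply Rabs_lt_between in Hd2. lra.
Qed.


Lemma iR_minus (f g : R -> R) a b x y : is_RInt f a b x -> is_RInt g a b y -> is_RInt (fun t => f t - g t) a b (x - y).
Proof. intros; apply (is_RInt_minus (V := R_NormedModule) f g); auto. Qed.
Lemma iR_plus (f g : R -> R) a b x y : is_RInt f a b x -> is_RInt g a b y -> is_RInt (fun t => f t + g t) a b (x + y).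
Proof. intros; apply (is_RInt_plus (V := R_NormedModule) f g); auto. Qed.
Lemma iR_scal (f : R -> R) a b k x : is_RInt f a b x -> is_RInt (fun t => k * f t) a b (k * x).
Proof. intros; apply (is_RInt_scal (V := R_NormedModule) f); auto. Qed.
Lemma iR_ext (f g : R -> R) a b x : a <= b -> (forall t, a < t < b -> f t = g t) -> is_RInt f a b x -> is_RInt g a b x.
Proof. intros H H1 H2. apply (is_RInt_ext (V := R_NormedModule) f); auto.
  intros t Ht; rewrite Rmin_left, Rmax_right in Ht by lra; auto. Qed.
Lemma iR_correct (f : R -> R) a b : ex_RInt f a b -> is_RInt f a b (RInt f a b).
Proof. intros H; apply (RInt_correct (V := R_CompleteNormedModule)); auto. Qed.
Lemma iR_uniq (f : R -> R) a b x : is_RInt f a b x -> RInt f a b = x.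
Proof. intros H; apply (is_RInt_unique (V := R_CompleteNormedModule)); auto. Qed.

Lemma RInt_nonpos (g : R -> R) a b : a <= b -> ex_RInt g a b -> (forall t, a < t < b -> g t <= 0) -> RInt g a b <= 0.
Proof.
  intros Hab Hex Hg.
  apply Rle_trans with (RInt (fun _ => 0) a b).
  apply RInt_le; auto. apply ex_RInt_const.
  rewrite RInt_const. change ((b - a) * 0 <= 0). lra.
Qed.

Lemma RInt_neg (g : R -> R) a b y z eta : a <= y -> y < z -> z <= b -> 0 < eta ->
  (forall u v, a <= u <= b -> a <= v <= b -> ex_RInt g u v) ->
  (forall t, a < t < b -> g t <= 0) -> (forall t, y < t < z -> g t <= - eta) -> RInt g a b < 0.
Proof.
  intros Hay Hyz Hzb Heta Hex Hg Hg2.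
  rewrite <- (RInt_Chasles g a y b) by (apply Hex; lra).
  rewrite <- (RInt_Chasles g y z b) by (apply Hex; lra).
  change (RInt g a y + (RInt g y z + RInt g z b) < 0).
  assert (RInt g a y <= 0) by (apply RInt_nonpos; [lra|apply Hex; lra|intros; apply Hg; lra]).
  assert (RInt g z b <= 0) by (apply RInt_nonpos; [lra|apply Hex; lra|intros; apply Hg; lra]).
  assert (RInt g y z <= - eta * (z - y)).
  { apply Rle_trans with (RInt (fun _ => - eta) y z).
    apply RInt_le; [lra|apply Hex; lra|apply ex_RInt_const|auto].
    rewrite RInt_const. change ((z - y) * - eta <= - eta * (z - y)). lra. }
  nra.
Qed.

Lemma zeta_lt x y : 0 <= x -> x < y -> y < 1 -> zeta x < zeta y.
Proof.
  intros; unfold zeta, Rdiv. apply Rmult_lt_compat_l; [lra|].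
  apply Rinv_lt_contravar; [apply Rmult_lt_0_compat; nra | nra].
Qed.

Lemma m0_eq a b : 0 <= a -> a < b -> b < 1 -> m0 a b = (1 + a * b) / (a + b).
Proof.
  intros. pose proof (zeta_lt a b H H0 H1). unfold m0 in *. unfold zeta in *.
  field. split; [lra|]. split; [nra|]. split; [nra|].
  intro E. nra.
Qed.

Lemma cont_minus (f g : R -> R) x : continuous f x -> continuous g x -> continuous (fun t => f t - g t) x.
Proof. intros. apply continuity_pt_filterlim, continuity_pt_minus; apply cont_pt_of; auto. Qed.
Lemma cont_plus (f g : R -> R) x : continuous f x -> continuous g x -> continuous (fun t => f t + g t) x.
Proof. intros. apply continuity_pt_filterlim, continuity_pt_plus; apply cont_pt_of; auto. Qed.
Lemma cont_cst (k : R) x : continuous (fun _ : R => k) x.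
Proof. apply continuous_const. Qed.

Lemma exR (f : R -> R) a b : a <= b -> (forall t, a <= t <= b -> continuous f t) -> ex_RInt f a b.
Proof. intros H H1. apply (ex_RInt_continuous (V := R_CompleteNormedModule)). intros t Ht.
  rewrite Rmin_left, Rmax_right in Ht by lra. auto. Qed.

Lemma dstar (a b c : R) (rho : R -> R) (M : R) : 0 <= a -> a < b -> b < 1 ->
  (forall y z, a <= y <= b -> a <= z <= b -> ex_RInt rho y z) ->
  (forall t, a <= t <= b -> Rabs (rho t) <= M) ->
  (forall t, a <= t <= b -> 0 <= rho t) ->
  (forall s t, a <= s -> s <= t -> t <= b -> rho s <= rho t) ->
  RInt (fun t => dU t * psi a b c rho t) a b - m0 a b * RInt (fun t => dV t * psi a b c rho t) a b <= 0 /\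
  ((exists t0, a <= t0 < b /\ 0 < rho t0) ->
   RInt (fun t => dU t * psi a b c rho t) a b - m0 a b * RInt (fun t => dV t * psi a b c rho t) a b < 0).
Proof.
  intros Ha Hab Hb Hex HM Hn Hmr.
  set (P := psi a b c rho).
  assert (HPc : forall x, continuous P x) by (intros; apply (psi_cont a b c rho M); auto; lra).
  set (m := m0 a b).
  assert (Hm1 : 1 < m).
  { unfold m; rewrite (m0_eq a b) by lra. apply Rmult_lt_reg_r with (a + b); [lra|].
    unfold Rdiv. rewrite Rmult_assoc, Rinv_l by lra. nra. }
  set (s := sqrt (m^2 - 1)).
  assert (Hs : s * s = m^2 - 1) by (unfold s; apply sqrt_sqrt; nra).
  assert (Hs0 : 0 <= s) by (unfold s; apply sqrt_pos).
  set (x0 := m - s). set (x1 := m + s).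
  set (KK := fun t => dU t - m * dV t).
  assert (HK : forall t, 0 <= t < 1 -> KK t = 2 * (t - x0) * (t - x1) * / (1 - t^2)^2).
  { intros t Ht. unfold KK, dU, dV.
    assert (E : 2 * (t - x0) * (t - x1) = 2 * (1 + t^2) - 4 * m * t) by (unfold x0, x1; nra).
    rewrite E. field. nra. }
  assert (Hq : forall t, 0 <= t < 1 -> 0 < / (1 - t^2)^2 /\ 1 <= / (1 - t^2)^2).
  { intros t Ht. assert (0 < (1 - t^2)^2) by (apply pow2_gt_0; nra).
    split; [apply Rinv_0_lt_compat; auto|].
    assert (0 < 1 - t^2 <= 1) by nra. assert (H1 : (1 - t^2)^2 <= 1) by nra.
    apply (Rmult_le_reg_l ((1-t^2)^2)); auto. rewrite Rinv_r by lra. lra. }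
  set (cc := clamp a b x0). set (p := P cc).
  assert (Hcc : a <= cc <= b) by (apply clamp_in; lra).
  assert (HdUc : forall t, a <= t <= b -> continuous dU t) by (intros; apply dU_cont; lra).
  assert (HdVc : forall t, a <= t <= b -> continuous dV t) by (intros; apply dV_cont; lra).
  assert (exA : ex_RInt (fun t => dU t * P t) a b) by (apply exR; [lra|intros; apply cont_mult; auto]).
  assert (exD : ex_RInt (fun t => dV t * P t) a b) by (apply exR; [lra|intros; apply cont_mult; auto]).
  set (w := fun t => KK t * (P t - p)).
  assert (Hwc : forall t, a <= t <= b -> continuous w t).
  { intros t Ht. apply cont_mult. apply cont_minus; auto. apply (cont_mult (fun _ => m)); auto. apply cont_cst.
    apply cont_minus; auto. apply cont_cst. }
  assert (Hexw : forall u v, a <= u <= b -> a <= v <= b -> ex_RInt w u v).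
  { intros u v Hu Hv. destruct (Rle_dec u v). apply exR; auto; intros; apply Hwc; lra.
    apply (ex_RInt_swap (V := R_NormedModule)). apply exR; [lra|]; intros; apply Hwc; lra. }
  assert (Hid : RInt (fun t => dU t * P t) a b - m * RInt (fun t => dV t * P t) a b = RInt w a b).
  { pose proof (iR_correct _ _ _ exA) as iA. pose proof (iR_correct _ _ _ exD) as iD.
    pose proof (U_int a b Ha ltac:(lra) Hb) as iU. pose proof (V_int a b Ha ltac:(lra) Hb) as iV.
    pose proof (iR_minus _ _ _ _ _ _ iA (iR_scal _ _ _ m _ iD)) as i1.
    pose proof (iR_minus _ _ _ _ _ _ iU (iR_scal _ _ _ m _ iV)) as i2.
    pose proof (iR_minus _ _ _ _ _ _ i1 (iR_scal _ _ _ p _ i2)) as i3.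
    apply (iR_ext _ w a b) in i3; [|lra|intros; unfold w, KK; ring].
    rewrite (iR_uniq _ _ _ _ i3).
    assert (Z : U b - U a - m * (zeta b - zeta a) = 0).
    { pose proof (zeta_lt a b Ha Hab Hb). unfold m, m0, U. field. lra. }
    rewrite Z. ring. }
  fold m. rewrite Hid.
  assert (Hsign : forall t, a <= t <= b -> w t <= 0).
  { intros t Ht. unfold w. rewrite HK by lra. destruct (Hq t ltac:(lra)) as [Hq1 _].
    destruct (Rle_dec t x0).
    - assert (P t <= p).
      { assert (t <= cc) by (unfold cc, clamp, Rmin; destruct (Rle_dec b x0);
        unfold Rmax; destruct (Rle_dec a _); lra).
        unfold p. apply psi_mono; auto; destruct Hcc; lra. }
      assert (0 <= 2 * (t - x0) * (t - x1) * / (1 - t ^ 2) ^ 2).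
      { apply Rmult_le_pos; [|lra]. assert (t - x0 <= 0) by lra. assert (t - x1 < 0) by (unfold x1; lra). nra. }
      nra.
    - assert (p <= P t).
      { assert (cc <= t) by (unfold cc, clamp, Rmin; destruct (Rle_dec b x0);
        unfold Rmax; destruct (Rle_dec a _); lra).
        unfold p. apply psi_mono; auto; destruct Hcc; lra. }
      assert (2 * (t - x0) * (t - x1) * / (1 - t ^ 2) ^ 2 <= 0).
      { assert (t - x0 >= 0) by lra. assert (t - x1 < 0) by (unfold x1; lra).
        assert (2 * (t - x0) * (t - x1) <= 0) by nra. nra. }
      nra. }
  split.
  { apply RInt_nonpos; [lra|apply Hexw; lra|intros; apply Hsign; lra]. }
  intros [t0 [Ht0 Hr0]].
  set (r0 := rho t0) in *.
  assert (HPe : forall y, a <= y <= b -> P y = exp (c + RInt rho a y)).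
  { intros y Hy. unfold P, psi. rewrite clamp_id; auto. }
  assert (Hgap : forall y z, t0 <= y -> y <= z -> z <= b -> r0 * (z - y) <= RInt rho a z - RInt rho a y).
  { intros y z H1 H2 H3. rewrite (H_chasles a b rho Hex y z) by lra.
    apply Rle_trans with (RInt (fun _ => r0) y z).
    rewrite RInt_const. change (r0 * (z - y) <= (z - y) * r0). lra.
    apply RInt_le; [lra|apply ex_RInt_const|apply Hex; lra|]. intros t Ht. apply Hmr; lra. }
  assert (HHm : forall y z, a <= y -> y <= z -> z <= b -> RInt rho a y <= RInt rho a z).
  { intros y z H1 H2 H3. rewrite <- (Rplus_0_r (RInt rho a y)).
    replace (RInt rho a z) with (RInt rho a y + (RInt rho a z - RInt rho a y)) by ring.
    apply Rplus_le_compat_l. rewrite (H_chasles a b rho Hex y z) by lra.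
    apply RInt_ge_0; [lra|apply Hex; lra|intros; apply Hn; lra]. }
  assert (Hx1 : 1 < x1) by (unfold x1; lra).
  destruct (Rlt_dec (Rmax t0 cc) b) as [Hmb|Hmb].
  - set (mm := Rmax t0 cc) in *.
    assert (Hmm : t0 <= mm /\ cc <= mm) by (unfold mm; split; [apply Rmax_l|apply Rmax_r]).
    assert (Hx0cc : x0 <= cc).
    { unfold cc, clamp, Rmin in *; destruct (Rle_dec b x0); unfold Rmax in *; destruct (Rle_dec a _); lra. }
    set (y1 := (mm + b) / 2).
    set (eta1 := 2 * (y1 - mm) * (x1 - b)).
    set (eta2 := P y1 - p).
    assert (He1 : 0 < eta1) by (unfold eta1, y1; apply Rmult_lt_0_compat; lra).
    assert (He2 : 0 < eta2).
    { unfold eta2, p. rewrite !HPe by (unfold y1; lra). apply Rlt_Rminus, exp_increasing.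
      pose proof (Hgap mm y1 ltac:(lra) ltac:(unfold y1; lra) ltac:(unfold y1; lra)).
      pose proof (HHm cc mm ltac:(lra) ltac:(lra) ltac:(lra)).
      assert (0 < r0 * (y1 - mm)) by (apply Rmult_lt_0_compat; unfold y1; lra). lra. }
    apply (RInt_neg w a b y1 b (eta1 * eta2)); auto; try (unfold y1; lra).
    + apply Rmult_lt_0_compat; auto.
    + intros t Ht; apply Hsign; lra.
    + intros t Ht. unfold y1 in Ht. unfold w. rewrite HK by lra. destruct (Hq t ltac:(lra)) as [Hq1 Hq2].
      assert (HPt : eta2 <= P t - p) by (unfold eta2; assert (P y1 <= P t) by (apply psi_mono; auto; unfold y1; lra); lra).
      assert (HN : 2 * (t - x0) * (t - x1) <= - eta1).
      { unfold eta1. assert (y1 - mm <= t - x0) by (unfold y1; lra). assert (x1 - b <= x1 - t) by lra.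
        assert (0 < y1 - mm) by (unfold y1; lra). assert (0 < x1 - b) by lra. nra. }
      assert (2 * (t - x0) * (t - x1) * / (1 - t ^ 2) ^ 2 <= - eta1) by nra.
      nra.
  - assert (Hccb : cc = b).
    { assert (cc <= b) by apply Hcc. pose proof (Rmax_r t0 cc). pose proof (Rmax_l t0 cc).
      destruct (Rle_dec cc t0); [rewrite Rmax_left in Hmb by lra; lra|]. rewrite Rmax_right in Hmb by lra. lra. }
    assert (Hx0b : b <= x0).
    { unfold cc, clamp, Rmin in Hccb; destruct (Rle_dec b x0); auto. unfold Rmax in Hccb; destruct (Rle_dec a _); lra. }
    set (y2 := (t0 + b) / 2).
    set (eta1 := 2 * (b - y2) * (x1 - b)).
    set (eta2 := p - P y2).
    assert (He1 : 0 < eta1) by (unfold eta1, y2; apply Rmult_lt_0_compat; lra).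
    assert (He2 : 0 < eta2).
    { unfold eta2, p. rewrite Hccb. rewrite !HPe by (unfold y2; lra). apply Rlt_Rminus, exp_increasing.
      pose proof (Hgap y2 b ltac:(unfold y2; lra) ltac:(unfold y2; lra) ltac:(lra)).
      assert (0 < r0 * (b - y2)) by (apply Rmult_lt_0_compat; unfold y2; lra). lra. }
    apply (RInt_neg w a b t0 y2 (eta1 * eta2)); auto; try (unfold y2; lra).
    + apply Rmult_lt_0_compat; auto.
    + intros t Ht; apply Hsign; lra.
    + intros t Ht. unfold y2 in Ht. unfold w. rewrite HK by lra. destruct (Hq t ltac:(lra)) as [Hq1 Hq2].
      assert (HPt : P t - p <= - eta2).
      { unfold eta2. assert (P t <= P ((t0 + b)/2)) by (apply psi_mono; auto; lra). fold y2 in H. lra. }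
      assert (HN : eta1 <= 2 * (t - x0) * (t - x1)).
      { unfold eta1. assert (b - y2 <= x0 - t) by (unfold y2; lra). assert (x1 - b <= x1 - t) by lra.
        assert (0 < b - y2) by (unfold y2; lra). assert (0 < x1 - b) by lra. nra. }
      assert (eta1 <= 2 * (t - x0) * (t - x1) * / (1 - t ^ 2) ^ 2) by nra.
      nra.
Qed.


Theorem mainTheorem9 (a b : R) (rho h : R -> R) (c L : R)
  (Hab : 0 <= a /\ a < b /\ b < 1)
  (Hnonneg : forall t, a <= t <= b -> 0 <= rho t)
  (Hbdd : exists M, forall t, a <= t <= b -> Rabs (rho t) <= M)
  (Hmono : forall s t, a <= s -> s <= t -> t <= b ->
             rho s / zeta s <= rho t / zeta t)
  (Hprim : forall x, a <= x <= b -> h x = c + Rint rho a x)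
  (HL : forall eps, eps > 0 -> exists delta, delta > 0 /\
          forall t, a <= t < b -> b - t < delta ->
            Rabs (rho t / zeta t - L) < eps) :
  m_rho h a b <= L + m0 a b /\
  (m_rho h a b = L + m0 a b <-> forall t, a <= t < b -> rho t = 0).
Proof.
  destruct Hab as [Ha [Hab Hb]]. destruct Hbdd as [M HM].
  pose proof (rho_mono a b rho Ha Hb Hnonneg Hmono) as Hmr.
  pose proof (rho_ex a b rho Hmr) as Hex.
  pose proof (rho_le_L a b rho L Ha Hab Hb Hmono HL) as HLz.
  assert (HL0 : 0 <= L).
  { pose proof (HLz a ltac:(lra)). pose proof (Hnonneg a ltac:(lra)). pose proof (zeta_pos a ltac:(lra)). nra. }
  set (P := psi a b c rho).
  assert (HPc : forall x, continuous P x) by (intros; apply (psi_cont a b c rho M); auto; lra).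
  assert (Hh : forall x, a <= x <= b -> exp (h x) = P x).
  { intros x Hx. rewrite Hprim by auto. rewrite Rint_RInt by (apply Hex; lra).
    unfold P, psi. rewrite clamp_id; auto. }
  set (D := RInt (fun t => dV t * P t) a b).
  set (A := RInt (fun t => dU t * P t) a b).
  assert (exD : ex_RInt (fun t => dV t * P t) a b) by (apply exR; [lra|intros; apply cont_mult; auto; apply dV_cont; lra]).
  assert (exA : ex_RInt (fun t => dU t * P t) a b) by (apply exR; [lra|intros; apply cont_mult; auto; apply dU_cont; lra]).
  assert (HmR : m_rho h a b = (U b * P b - U a * P a) / D).
  { unfold m_rho. rewrite <- !Hh by lra. unfold U. f_equal.
    assert (Hext : forall t, a < t < b -> dV t * P t = t * zeta t ^ 2 * exp (h t)).
    { intros t Ht. rewrite Hh by lra. rewrite dV_eq by lra. ring. }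
    rewrite Rint_RInt.
    - symmetry. unfold D. apply RInt_ext. intros t Ht. rewrite Rmin_left, Rmax_right in Ht by lra. auto.
    - apply (ex_RInt_ext (V := R_NormedModule) (fun t => dV t * P t)); auto.
      intros t Ht. rewrite Rmin_left, Rmax_right in Ht by lra. auto. }
  assert (HDpos : exp c * (zeta b - zeta a) <= D).
  { unfold D. rewrite <- (iR_uniq _ _ _ _ (iR_scal _ _ _ (exp c) _ (V_int a b Ha ltac:(lra) Hb))).
    apply RInt_le; [lra| |auto|].
    - eexists; apply (iR_scal _ _ _ (exp c) _ (V_int a b Ha ltac:(lra) Hb)).
    - intros t Ht. rewrite Rmult_comm. apply Rmult_le_compat_l. apply dV_nn; lra.
      apply (psi_ge a b c rho); auto; lra. }
  assert (HD : 0 < D).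
  { pose proof (zeta_lt a b Ha Hab Hb). pose proof (exp_pos c). nra. }
  assert (Hst : U b * P b - U a * P a <= A + L * D).
  { pose proof (star a b c rho L M Ha Hab Hb Hex HM Hnonneg HLz HL0) as S. fold P in S.
    assert (E : RInt (fun t => (dU t + L * dV t) * P t) a b = A + L * D).
    { apply iR_uniq. apply (iR_ext (fun t => dU t * P t + L * (dV t * P t))); [lra|intros; ring|].
      apply iR_plus. apply iR_correct; auto. apply iR_scal. apply iR_correct; auto. }
    lra. }
  destruct (dstar a b c rho M Ha Hab Hb Hex HM Hnonneg Hmr) as [Hds Hstrict]. fold P A D in Hds, Hstrict.
  rewrite HmR. split.
  { apply Rmult_le_reg_r with D; auto. unfold Rdiv. rewrite Rmult_assoc, Rinv_l by lra. nra. }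
  split.
  - intros Heq t Ht.
    apply NNPP. intro Hne.
    assert (Hpos : 0 < rho t) by (pose proof (Hnonneg t ltac:(lra)); lra).
    specialize (Hstrict (ex_intro _ t (conj Ht Hpos))).
    assert (U b * P b - U a * P a = (L + m0 a b) * D).
    { rewrite <- Heq. field. lra. }
    nra.
  - intros H0.
    assert (HL00 : L = 0).
    { destruct (Req_dec L 0) as [E|E]; auto. exfalso.
      destruct (HL (Rabs L) ltac:(apply Rabs_pos_lt; auto)) as [d [Hd Hd2]].
      set (t := Rmax a (b - d/2)).
      assert (Ht : a <= t < b /\ b - t < d) by (unfold t, Rmax; destruct (Rle_dec a (b - d/2)); lra).
      specialize (Hd2 t (proj1 Ht) (proj2 Ht)). rewrite H0 in Hd2 by lra.
      unfold Rdiv in Hd2. rewrite Rmult_0_l, Rminus_0_l, Rabs_Ropp in Hd2. lra. }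
    assert (HPc0 : forall x, a <= x <= b -> P x = exp c).
    { intros x Hx. unfold P, psi. rewrite clamp_id by auto.
      replace (RInt rho a x) with 0. f_equal; ring.
      rewrite (RInt_ext rho (fun _ => 0)).
      rewrite RInt_const. change (0 = (x - a) * 0). ring.
      intros t Ht. rewrite Rmin_left, Rmax_right in Ht by lra. apply H0. lra. }
    assert (HDe : D = exp c * (zeta b - zeta a)).
    { unfold D. rewrite <- (iR_uniq _ _ _ _ (iR_scal _ _ _ (exp c) _ (V_int a b Ha ltac:(lra) Hb))).
      apply (RInt_ext (V := R_CompleteNormedModule)). simpl. intros t Ht. rewrite Rmin_left, Rmax_right in Ht by lra.
      rewrite HPc0 by lra. ring. }
    rewrite HDe, HL00, !HPc0 by lra.
    pose proof (zeta_lt a b Ha Hab Hb). pose proof (exp_pos c).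
    unfold m0, U. field. lra.
Qed.
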